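(* We have \[ H(n, k) = \sum_{v = 0}^{s - t - 1} H_p(d_0, \ldots, d_{t + v + 1})\cdot p^{v - ks + U_p(k)} + O\big(p^{s - t - ks + U_p(k)}\big) . \]
   Context: For integers $n \geq k \geq 1$, $H(n,k) := \sum_{1 \leq i_1 < \cdots < i_k \leq n} \frac{1}{i_1 \cdots i_k}$. Fix a prime $p$. For digits $a_0,\ldots,a_v \in \{0,\ldots,p-1\}$ with $a_0 \neq 0$, write $\langle a_0, \ldots, a_v \rangle_p := \sum_{i=0}^v a_i p^{v-i}$ (base $p$ representation). Let $k = \langle e_0, \ldots, e_t \rangle_p + 1 \geq 2$ and $n = \langle d_0, \ldots, d_s \rangle_p$ with $s \geq t+1$ and $d_i = e_i$ for $i = 0,\ldots,t$. For $a_0,\ldots,a_v \in \{0,\ldots,p-1\}$ put $B_p(a_0,\ldots,a_v) := \langle a_0,\ldots,a_v\rangle_p - \langle a_0,\ldots,a_{v-1}\rangle_p$ (with $\langle a_0,\ldots,a_{v-1}\rangle_p = 0$ if $v=0$), and $\mathcal{B}_p(a_0,\ldots,a_v) := \{c_p(i) : i = 1,\ldots,B_p(a_0,\ldots,a_v)\}$, where $c_p(1) < c_p(2) < \cdots$ is the sequence of all positive integers not divisible by $p$. For $v \geq 0$ let $\mathcal{A}_p(n,v) := \{m \in \{1,\ldots,n\} : \nu_p(m) = s - v\}$. Let $\mathcal{C}_p(n,k) := \bigcup_{v=0}^t \mathcal{A}_p(n,v)$ and $\Pi_p(k) := \prod_{j \in \mathcal{C}_p(n,k)} \frac{1}{j/p^{\nu_p(j)}}$,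 i.e. the product of the reciprocals of the $p$-free parts $j/p^{\nu_p(j)}$ of the elements $j \in \mathcal{C}_p(n,k)$ (this depends only on $p$ and $k$). Put $U_p(k) := \sum_{v=0}^t B_p(e_0,\ldots,e_v)\, v + t + 1$. For $a_0,\ldots,a_{t+v+1} \in \{0,\ldots,p-1\}$ with $v \geq 0$ and $a_i = e_i$ for $i=0,\ldots,t$, set \[ H_p^\prime(a_0,\ldots,a_{t+v}) := \sum_{\substack{0 \leq v_1,\ldots,v_k \leq t+v \\ v_1+\cdots+v_k = U_p(k)+v}} \; \sum_{\substack{j_1/p^{v_1} < \cdots < j_k/p^{v_k} \\ j_1 \in \mathcal{B}_p(a_0,\ldots,a_{v_1}),\ldots, j_k \in \mathcal{B}_p(a_0,\ldots,a_{v_k})}} \frac{1}{j_1\cdots j_k} \] and \[ H_p(a_0,\ldots,a_{t+v+1}) := H_p^\prime(a_0,\ldots,a_{t+v}) + \Pi_p(k) \sum_{j \in \mathcal{B}_p(a_0,\ldots,a_{t+v+1})} \frac{1}{j}. \] $O(p^v)$ denotes a rational number with $p$-adic valuation at least $v$. *)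

(* Defs.v *)
From HB Require Import structures.
From mathcomp Require Import all_boot all_order all_algebra.
Set Implicit Arguments. Unset Strict Implicit. Unset Printing Implicit Defensive.
Import Order.TTheory GRing.Theory Num.Theory.
Local Open Scope ring_scope.

(* H(n,k) = sum over k-subsets {i_1<...<i_k} of {1..n} of 1/(i_1...i_k);
   the element i : 'I_n stands for the integer i+1. *)
Definition Hnk (n k : nat) : rat :=
  \sum_(S : {set 'I_n} | #|S| == k) \prod_(i in S) ((i.+1)%:R)^-1.

Definition digval (p : nat) (a : seq nat) : nat :=
  foldl (fun acc x => (acc * p + x)%N) 0%N a.

Definition Bp (p : nat) (a : seq nat) : nat :=
  (digval p a - digval p (take (size a).-1 a))%N.

(* {c_p(1),...,c_p(B)}: the first B positive integers not divisible by p
   (for p >= 2 they all lie in [1, B*p]). *)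
Definition Bset (p B : nat) : seq nat :=
  take B [seq m <- iota 1 (B * p) | ~~ (p %| m)%N].

Definition calB (p : nat) (a : seq nat) : seq nat := Bset p (Bp p a).

Definition Up (p : nat) (es : seq nat) : nat :=
  (\sum_(v < size es) Bp p (take v.+1 es) * v + size es)%N.

(* Pi_p(k) = prod_{j in C_p(n,k)} (j / p^{nu_p(j)})^{-1},
   C_p(n,k) = {m in 1..n : s - t <= nu_p(m) <= s} (union of A_p(n,v), v=0..t) *)
Definition Pip (p n s t : nat) : rat :=
  \prod_(1 <= m < n.+1 | ((s - t <= logn p m) && (logn p m <= s))%N)
     ((m%:R / (p ^ logn p m)%:R)^-1).

(* H'_p(a_0,...,a_{t+v}), a = [a_0;...;a_{t+v}], es = [e_0;...;e_t], k = <es>_p + 1.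
   The tuple (v_1..v_k) ranges over [0, t+v]^k = 'I_(size a)^k, and (j_1..j_k)
   over k-tuples of naturals (bounded by p^(size a + 1), which exceeds every
   element of the sets script B involved) with j_i in script B_p(a_0..a_{v_i}). *)
Definition Hprime (p : nat) (es a : seq nat) : rat :=
  let k := (digval p es).+1 in
  let t := (size es).-1 in
  let v := ((size a).-1 - t)%N in
  \sum_(vv : {ffun 'I_k -> 'I_(size a)} | (\sum_i (vv i : nat) == Up p es + v)%N)
    \sum_(js : {ffun 'I_k -> 'I_(p ^ (size a).+1)} |
            [forall i : 'I_k, (js i : nat) \in calB p (take (vv i).+1 a)] &&
            [forall i : 'I_k, forall j : 'I_k, (i < j)%N ==>
               ((js i)%:R / (p ^ vv i)%:R < (js j)%:R / (p ^ vv j)%:R :> rat)])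
      \prod_i ((js i : nat)%:R)^-1.

Definition Hp (p : nat) (es : seq nat) (n s : nat) (a : seq nat) : rat :=
  Hprime p es (take (size a).-1 a)
  + Pip p n s (size es).-1 * \sum_(j <- calB p a) (j%:R)^-1.

Definition pval (p : nat) (q : rat) : int :=
  (logn p `|numq q|%N)%:Z - (logn p `|denq q|%N)%:Z.

(* q = O(p^e): q has p-adic valuation at least e (q = 0 has valuation +oo) *)
Definition bigOp (p : nat) (e : int) (q : rat) : Prop :=
  q = 0 \/ e <= pval p q.

(* Main.v *)
Require Import Defs.
From HB Require Import structures.
From mathcomp Require Import all_boot all_order all_algebra.
From mathcomp Require Import zify ring.
Import Order.TTheory GRing.Theory Num.Theory.

Lemma foldl_dig p acc b :
  foldl (fun acc x => (acc * p + x)%N) acc b = (acc * p ^ size b + digval p b)%N.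
Proof.
elim: b acc => [|x b IH] acc /=; first by rewrite /digval /= expn0 muln1 addn0.
rewrite /digval /= IH [in RHS]IH expnS; lia.
Qed.

Lemma digval_cat p a b : digval p (a ++ b) = (digval p a * p ^ size b + digval p b)%N.
Proof. by rewrite /digval foldl_cat foldl_dig. Qed.

Lemma digval_rcons p a x : digval p (rcons a x) = (digval p a * p + x)%N.
Proof. by rewrite -cats1 digval_cat /= expn1 /digval /=. Qed.

Lemma digval_lt p b : all (fun x => x < p)%N b -> (digval p b < p ^ size b)%N.
Proof.
elim/last_ind: b => [|b x IH]; first by rewrite /digval.
rewrite all_rcons => /andP[hx /IH hb]; rewrite digval_rcons size_rcons expnS.
have hp : (0 < p)%N by case: p hx {hb IH}.
nia.
Qed.

Lemma count_dvd p N : (0 < p)%N -> count (fun m => p %| m) (iota 1 N) = N %/ p.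
Proof.
move=> hp; elim: N => [|N IH]; first by rewrite div0n.
rewrite -[N.+1]addn1 iotaD count_cat IH /= addn0 add1n addn1 divnS //; case: (p %| N.+1); lia.
Qed.

Lemma Bset_eq p D : prime p ->
  Bset p (D - D %/ p) = [seq m <- iota 1 D | ~~ (p %| m)].
Proof.
move=> pp; have p2 := prime_gt1 pp; have p0 : (0 < p)%N by lia.
rewrite /Bset.
have hD : (D <= (D - D %/ p) * p)%N.
  have := leq_divM D p; nia.
have hc : count (fun m => ~~ (p %| m)) (iota 1 D) = (D - D %/ p)%N.
  have := count_predC (fun m => p %| m) (iota 1 D).
  rewrite size_iota count_dvd // => h.
  apply/eqP; rewrite eq_sym -(eqn_add2l (D %/ p)) subnKC ?leq_div //; apply/eqP.
  exact: esym h.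
rewrite -{1}(subnKC hD) iotaD filter_cat take_size_cat // size_filter hc //.
Qed.

Lemma size_Bset p B : prime p -> size (Bset p B) = B.
Proof.
move=> pp; have p2 := prime_gt1 pp; have p0 : (0 < p)%N by lia.
rewrite /Bset size_takel // size_filter.
have := count_predC (fun m => p %| m) (iota 1 (B * p)).
rewrite size_iota count_dvd // mulnK // => h.
have e : count (fun m => ~~ (p %| m)) (iota 1 (B * p)) = (B * p - B)%N.
  apply/eqP; rewrite eq_sym -(eqn_add2l B) subnKC ?leq_pmulr //; apply/eqP; exact: esym h.
rewrite e; nia.
Qed.


Local Open Scope ring_scope.

Lemma exprz_split (x : rat) (a b c : nat) : x != 0 ->
  x ^ (a%:Z - b%:Z + c%:Z) = x ^+ (c + a) / x ^+ b.
Proof.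
move=> hx; rewrite expfzDr // expfzDr // -exprz_inv.
change (x ^+ a * x^-1 ^+ b * x ^+ c = x ^+ (c + a) / x ^+ b).
rewrite exprVn exprD; ring.
Qed.

Definition pint (p : nat) (q : rat) :=
  exists (a : int) (b : nat), ~~ (p %| b)%N /\ q = a%:~R / b%:R.

Lemma pint_add p q1 q2 : prime p -> pint p q1 -> pint p q2 -> pint p (q1 + q2).
Proof.
move=> pp [a1 [b1 [h1 ->]]] [a2 [b2 [h2 ->]]].
exists (a1 * b2%:Z + a2 * b1%:Z), (b1 * b2)%N; split.
  by rewrite Euclid_dvdM // negb_or h1 h2.
have hb1 : (b1%:R : rat) != 0 by rewrite pnatr_eq0; apply/eqP => e; move: h1; rewrite e dvdn0.
have hb2 : (b2%:R : rat) != 0 by rewrite pnatr_eq0; apply/eqP => e; move: h2; rewrite e dvdn0.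
rewrite natrM intrD !intrM /=; rewrite !pmulrn /=. field; by rewrite hb1 hb2.
Qed.

Lemma pint_mul p q1 q2 : prime p -> pint p q1 -> pint p q2 -> pint p (q1 * q2).
Proof.
move=> pp [a1 [b1 [h1 ->]]] [a2 [b2 [h2 ->]]].
exists (a1 * a2), (b1 * b2)%N; split.
  by rewrite Euclid_dvdM // negb_or h1 h2.
rewrite natrM intrM invfM; ring.
Qed.

Lemma pint1 p : prime p -> pint p 1.
Proof. move=> pp. exists 1, 1%N; split; last by rewrite divr1.
by rewrite dvdn1; apply/eqP => e; move: pp; rewrite e.
Qed.

Lemma pint_natX p e : prime p -> pint p ((p%:R : rat) ^+ e).
Proof.
move=> pp; exists (p ^ e)%N%:Z, 1%N; split; last first.
  by rewrite divr1 -natrX.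

by rewrite dvdn1; apply/eqP => e'; move: pp; rewrite e'.
Qed.

Lemma pint_inv p (b : nat) : ~~ (p %| b)%N -> pint p ((b%:R : rat)^-1).
Proof. by move=> h; exists 1, b; split; last by rewrite div1r. Qed.

Lemma pint_sum p (I : finType) (P : pred I) (F : I -> rat) : prime p ->
  (forall i, P i -> pint p (F i)) -> pint p (\sum_(i | P i) F i).
Proof.
move=> pp h; apply: big_ind => //.
- by exists 0, 1%N; split; [rewrite dvdn1; apply/eqP => e; move: pp; rewrite e | rewrite mul0r].
- by move=> ? ?; apply: pint_add.
Qed.

Lemma pint_prod p (I : finType) (P : pred I) (F : I -> rat) : prime p ->
  (forall i, P i -> pint p (F i)) -> pint p (\prod_(i | P i) F i).
Proof.
move=> pp h; apply: big_ind => //.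
- exact: pint1.
- by move=> ? ?; apply: pint_mul.
Qed.

Lemma pval_frac p (A : int) (B : nat) : A != 0 -> (0 < B)%N ->
  pval p (A%:~R / B%:R) = (logn p `|A|)%:Z - (logn p B)%:Z.
Proof.
move=> hA hB.
set q := A%:~R / B%:R.
have hBr : (B%:R : rat) != 0 by rewrite pnatr_eq0 -lt0n.
have hAr : (A%:~R : rat) != 0 by rewrite intr_eq0.
have hq0 : q != 0 by rewrite /q mulf_neq0 // invr_eq0.
have hd : ((denq q)%:~R : rat) != 0 by rewrite intr_eq0 gt_eqF ?denq_gt0.
have hn : ((numq q)%:~R : rat) = q * (denq q)%:~R.
  by rewrite -{2}(divq_num_den q) mulfVK.
have e : (numq q * B%:Z = A * denq q)%R.
  apply: (@intr_inj rat); rewrite !intrM hn /q /=.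
  rewrite pmulrn; field; by rewrite hBr.
have e2 : (`|numq q| * B = `|A| * `|denq q|)%N.
  by have := congr1 absz e; rewrite !abszM.
have hnq : (0 < `|numq q|)%N by rewrite absz_gt0 numq_eq0.
have hdq : (0 < `|denq q|)%N by rewrite absz_gt0 gt_eqF ?denq_gt0.
have hAq : (0 < `|A|)%N by rewrite absz_gt0.
have e3 : (logn p `|numq q| + logn p B = logn p `|A| + logn p `|denq q|)%N.
  by rewrite -!lognM // e2.
rewrite /pval; lia.
Qed.

Lemma bigOp_of p (e : int) X N M : prime p -> pint p X -> e = N%:Z - M%:Z ->
  bigOp p e (X * (p%:R)^+N / (p%:R)^+M).
Proof.
move=> pp [a [b [hb ->]]] ->.
have b0 : (0 < b)%N by case: b hb => //; rewrite dvdn0.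
have [->|ha] := eqVneq a 0; first by left; rewrite !mul0r.
right.
have -> : a%:~R / b%:R * (p%:R : rat) ^+ N / p%:R ^+ M
    = (a * (p ^ N)%N%:Z)%:~R / (b * p ^ M)%:R.
  rewrite intrM natrM !natrX pmulrn; set P := (p%:R : rat).
  rewrite -[((p ^ N)%N%:Z)%:~R]/(((p ^ N)%N)%:R) natrX.
  have hP : P != 0 by rewrite pnatr_eq0; apply/eqP => h; move: pp; rewrite h.
  have hbr : (b%:R : rat) != 0 by rewrite pnatr_eq0 -lt0n.
  field; by rewrite hbr expf_neq0.
have p0 : (0 < p)%N := prime_gt0 pp.
have l1 : logn p `|a * (p ^ N)%N%:Z| = (logn p `|a| + N)%N.
  by rewrite abszM /= lognM ?absz_gt0 ?expn_gt0 ?p0 // pfactorK.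
have l2 : logn p (b * p ^ M) = M.
  by rewrite lognM ?expn_gt0 ?p0 // pfactorK // logn_coprime ?prime_coprime.
rewrite pval_frac; last by rewrite muln_gt0 b0 expn_gt0 p0.
  rewrite l1 l2; lia.
by rewrite mulf_neq0 // eqz_nat expn_eq0 negb_and -lt0n p0.
Qed.

Local Close Scope ring_scope.

Section Levels.
Variables (p : nat) (ds : seq nat) (s : nat).
Hypothesis pp : prime p.
Hypothesis hds : size ds = s.+1.
Hypothesis hdig : all (fun x => x < p)%N ds.

Local Notation n := (digval p ds).
Definition Dw w := digval p (take w.+1 ds).

Lemma p_gt0 : (0 < p)%N. Proof. exact: prime_gt0. Qed.

Lemma Dw_n w : (w <= s)%N -> exists2 r, (r < p ^ (s - w))%N & n = (Dw w * p ^ (s - w) + r)%N.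
Proof.
move=> ws; exists (digval p (drop w.+1 ds)).
  have -> : (s - w = size (drop w.+1 ds))%N by rewrite size_drop hds.
  apply: digval_lt; apply/allP => x /mem_drop hx; exact: (allP hdig).
rewrite /Dw -{1}(cat_take_drop w.+1 ds) digval_cat size_drop hds.
by rewrite subSS.
Qed.

Lemma Dw_div w : (w <= s)%N -> Dw w = n %/ p ^ (s - w).
Proof.
move=> ws; have [r hr ->] := Dw_n w ws.
by rewrite divnMDl ?expn_gt0 ?p_gt0 // divn_small // addn0.
Qed.

Lemma Dw_le w j : (w <= s)%N -> (j <= Dw w)%N = (j * p ^ (s - w) <= n)%N.
Proof. by move=> ws; rewrite Dw_div // leq_divRL // expn_gt0 p_gt0. Qed.

Lemma Dw_rec w : (w <= s)%N -> Dw w = (digval p (take w ds) * p + nth 0 ds w)%N.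
Proof. by move=> ws; rewrite /Dw (take_nth 0) ?hds // digval_rcons. Qed.

Lemma nth_lt w : (w <= s)%N -> (nth 0 ds w < p)%N.
Proof. by move=> ws; apply: (allP hdig); rewrite mem_nth // hds. Qed.

Lemma Dw_prev w : (w <= s)%N -> digval p (take w ds) = Dw w %/ p.
Proof.
move=> ws; rewrite Dw_rec // divnMDl ?p_gt0 // divn_small ?nth_lt // addn0 //.
Qed.

Lemma Bp_take w : (w <= s)%N -> Bp p (take w.+1 ds) = (Dw w - Dw w %/ p)%N.
Proof.
move=> ws; rewrite /Bp size_takel ?hds // take_takel // -Dw_prev //.
Qed.

Lemma calB_eq w : (w <= s)%N ->
  calB p (take w.+1 ds) = [seq m <- iota 1 (Dw w) | ~~ (p %| m)].
Proof. by move=> ws; rewrite /calB Bp_take // Bset_eq. Qed.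

Lemma calB_mem w j : (w <= s)%N ->
  (j \in calB p (take w.+1 ds)) = [&& (0 < j)%N, (j <= Dw w)%N & ~~ (p %| j)].
Proof.
move=> ws; rewrite calB_eq // mem_filter mem_iota; case: (p %| j) => /=.
  by rewrite !andbF.
rewrite andbT; case: j => [|j] //=; rewrite add1n ltnS.
Qed.

Lemma calB_uniq w : (w <= s)%N -> uniq (calB p (take w.+1 ds)).
Proof. by move=> ws; rewrite calB_eq // filter_uniq // iota_uniq. Qed.

Lemma n_lt : (n < p ^ s.+1)%N.
Proof. by have := @digval_lt p ds hdig; rewrite hds. Qed.

Lemma logn_le m : (0 < m)%N -> (m <= n)%N -> (logn p m <= s)%N.
Proof.
move=> m0 mn.
have h1 : (p ^ logn p m <= m)%N by apply: dvdn_leq => //; exact: pfactor_dvdnn.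
have : (p ^ logn p m < p ^ s.+1)%N by apply: leq_ltn_trans h1 (leq_ltn_trans mn n_lt).
by rewrite ltn_exp2l ?prime_gt1.
Qed.

Lemma logn_J j e : ~~ (p %| j) -> (0 < j)%N -> logn p (j * p ^ e) = e.
Proof.
move=> hj j0; rewrite lognM // ?expn_gt0 ?p_gt0 // pfactorK // logn_coprime ?add0n //.
by rewrite prime_coprime.
Qed.

Definition lev (z : 'I_n) := (s - logn p z.+1)%N.
Definition pf (z : 'I_n) := (z.+1 %/ p ^ logn p z.+1)%N.

Lemma logn_z (z : 'I_n) : (logn p z.+1 <= s)%N.
Proof. by apply: logn_le => //; exact: ltn_ord. Qed.

Lemma lev_le (z : 'I_n) : (lev z <= s)%N.
Proof. by rewrite /lev leq_subr. Qed.

Lemma pf_eq (z : 'I_n) : z.+1 = (pf z * p ^ (s - lev z))%N.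
Proof.
rewrite /lev subKn ?logn_z // /pf divnK //; exact: pfactor_dvdnn.
Qed.

Lemma pf_gt0 (z : 'I_n) : (0 < pf z)%N.
Proof. have := pf_eq z; case: (pf z) => //. Qed.

Lemma pf_ndvd (z : 'I_n) : ~~ (p %| pf z).
Proof.
apply/negP => hd.
have h := pf_eq z.
have : logn p z.+1 = (logn p (pf z) + (s - lev z))%N.
  by rewrite {1}h lognM ?pf_gt0 ?expn_gt0 ?p_gt0 // pfactorK.
rewrite /lev subKn ?logn_z //.
have : (0 < logn p (pf z))%N by rewrite logn_gt0 mem_primes pp pf_gt0.
lia.
Qed.

Lemma pf_le (z : 'I_n) : (pf z <= Dw (lev z))%N.
Proof. by rewrite Dw_le ?lev_le // -pf_eq; exact: ltn_ord. Qed.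

Lemma lev_pf_uniq (z : 'I_n) j e : (e <= s)%N -> ~~ (p %| j) ->
  z.+1 = (j * p ^ (s - e))%N -> lev z = e /\ pf z = j.
Proof.
move=> es hj hz.
have j0 : (0 < j)%N by case: j hj hz => // /=; rewrite mul0n.
have hl : logn p z.+1 = (s - e)%N by rewrite hz logn_J.
have le : lev z = e by rewrite /lev hl; lia.
split=> //; rewrite /pf hl hz mulnK // expn_gt0 p_gt0 //.
Qed.

Lemma lev_pf_inj (z y : 'I_n) : lev z = lev y -> pf z = pf y -> z = y.
Proof.
move=> h1 h2; apply/val_inj/eqP; rewrite -eqSS; apply/eqP.
by rewrite (pf_eq z) (pf_eq y) h1 h2.
Qed.

Lemma lev_exists j e : (e <= s)%N -> ~~ (p %| j) -> (0 < j)%N -> (j <= Dw e)%N ->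
  exists z : 'I_n, lev z = e /\ pf z = j.
Proof.
move=> es hj j0; rewrite Dw_le // => hle.
have hlt : ((j * p ^ (s - e)).-1 < n)%N.
  have : (0 < j * p ^ (s - e))%N by rewrite muln_gt0 j0 expn_gt0 p_gt0.
  lia.
exists (Ordinal hlt); apply: lev_pf_uniq => //=.
have : (0 < j * p ^ (s - e))%N by rewrite muln_gt0 j0 expn_gt0 p_gt0.
lia.
Qed.


Lemma class_sum (R : Type) (idx : R) (op : Monoid.com_law idx) w (F : nat -> R) :
  (w <= s)%N ->
  \big[op/idx]_(z : 'I_n | lev z == w) F (pf z) = \big[op/idx]_(j <- calB p (take w.+1 ds)) F j.
Proof.
move=> ws.
rewrite -(big_image _ _ pf [pred z : 'I_n | lev z == w]).
apply: perm_big; apply: uniq_perm.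
- rewrite /image_mem map_inj_in_uniq ?enum_uniq //.
  move=> x y; rewrite !mem_enum /= => /eqP hx /eqP hy hxy.
  by apply: lev_pf_inj; rewrite ?hx ?hy.
- exact: calB_uniq.
move=> j; rewrite calB_mem //; apply/imageP/idP.
  case=> z /= /eqP <- ->; by rewrite pf_gt0 pf_le pf_ndvd.
case/and3P=> j0 jD hj.
have [z [hz1 hz2]] := @lev_exists j w ws hj j0 jD.
by exists z; rewrite ?hz2 // inE /= hz1.
Qed.

Lemma class_card w : (w <= s)%N -> #|[set z : 'I_n | lev z == w]| = Bp p (take w.+1 ds).
Proof.
move=> ws; rewrite -sum1_card.
rewrite (eq_bigl (fun z : 'I_n => lev z == w)); last by move=> z; rewrite inE.
by rewrite (@class_sum nat 0%N addn w (fun _ => 1%N) ws) sum1_size /calB size_Bset.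
Qed.

Definition Cs t := [set z : 'I_n | (lev z <= t)%N].
Definition W (S : {set 'I_n}) := (\sum_(z in S) lev z)%N.

Lemma W_ge t (R : {set 'I_n}) : #|R| = #|Cs t| -> (W (Cs t) + #|R :\: Cs t| <= W R)%N.
Proof.
move=> hc.
rewrite /W (@big_setID _ _ _ _ (Cs t) R) [in X in (_ <= X)%N](@big_setID _ _ _ _ R (Cs t)) /= setIC.
have h1 := cardsID (Cs t) R; have h2 := cardsID R (Cs t).
rewrite setIC in h2.
have e1 : ((t.+1) * #|R :\: Cs t| <= \sum_(i in R :\: Cs t) lev i)%N.
  rewrite mulnC -sum_nat_const; apply: leq_sum => z; rewrite !inE => /andP[].
  by rewrite -ltnNge.
have e2 : (\sum_(i in Cs t :\: R) lev i <= t * #|Cs t :\: R|)%N.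
  rewrite mulnC -sum_nat_const; apply: leq_sum => z; rewrite !inE => /andP[].
  by [].
have ec : #|Cs t :\: R| = #|R :\: Cs t| by apply/eqP; rewrite -(eqn_add2l #|R :&: Cs t|) h1 h2 hc.
rewrite ec in e2; rewrite mulSn in e1.
rewrite -addnA leq_add2l (leq_trans _ e1) // addnC leq_add2l //.
Qed.

Lemma W_eqC t (R : {set 'I_n}) : #|R| = #|Cs t| -> (W R <= W (Cs t))%N -> R = Cs t.
Proof.
move=> hc hw; have := @W_ge t R hc => h.
have h0 : #|R :\: Cs t| = 0%N by lia.
apply/eqP; rewrite eqEcard hc leqnn andbT -setD_eq0 -cards_eq0 h0 //.
Qed.

Lemma S_split t (S : {set 'I_n}) x : x \in S -> #|S| = (#|Cs t|).+1 ->
  (W (Cs t) + lev x <= W S)%N /\ (W S = (W (Cs t) + lev x)%N -> S = x |: Cs t).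
Proof.
move=> xS hc.
have hW : W S = (lev x + W (S :\ x))%N by rewrite /W (big_setD1 _ xS).
have hc' : #|S :\ x| = #|Cs t| by have := cardsD1 x S; rewrite xS hc; lia.
have := @W_ge t _ hc' => h; split; first lia.
move=> he; have := @W_eqC t _ hc' => h2.
have <- : S :\ x = Cs t by apply: h2; lia.
by rewrite setD1K.
Qed.

Lemma exists_out t (S : {set 'I_n}) : #|S| = (#|Cs t|).+1 -> exists2 x, x \in S & (t < lev x)%N.
Proof.
move=> hc; have : ~~ (S \subset Cs t).
  by apply/negP => /subset_leq_card; rewrite hc ltnn.
case/subsetPn => x xS; rewrite inE -ltnNge => hx; by exists x.
Qed.


Lemma sum_Cs t (G : 'I_n -> nat) :
  (\sum_(z in Cs t) G z = \sum_(w < t.+1) \sum_(z | lev z == w) G z)%N.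
Proof.
rewrite (partition_big (fun z => inord (lev z) : 'I_t.+1) predT) //=.
apply: eq_bigr => w _; apply: eq_bigl => z; rewrite inE.
apply/andP/eqP.
  by case=> h /eqP <-; rewrite inordK.
move=> h; split; first by rewrite h -ltnS ltn_ord.
by apply/eqP/val_inj; rewrite /= inordK h // ltn_ord.
Qed.

Lemma card_Cs t : (t <= s)%N -> #|Cs t| = Dw t.
Proof.
move=> ts; rewrite -sum1_card sum_Cs.
rewrite (eq_bigr (fun w : 'I_t.+1 => Bp p (take w.+1 ds))); last first.
  move=> w _; rewrite -(@class_card w); last by apply: leq_trans ts; rewrite -ltnS ltn_ord.
  by rewrite -sum1_card; apply: eq_bigl => z; rewrite inE.
elim: t ts => [|t IH] ts.
  by rewrite big_ord1 Bp_take // -Dw_prev // take0 /digval /= subn0.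
rewrite (big_ord_recr t.+1) /= IH; last lia.
rewrite Bp_take // -Dw_prev // (@Dw_rec t.+1) // /Dw; have := p_gt0; nia.
Qed.

Lemma W_Cs t : (t <= s)%N -> W (Cs t) = (\sum_(w < t.+1) Bp p (take w.+1 ds) * w)%N.
Proof.
move=> ts; rewrite /W sum_Cs; apply: eq_bigr => w _.
rewrite -(@class_card w); last by apply: leq_trans ts; rewrite -ltnS ltn_ord.
rewrite -sum1_card big_distrl /=; apply: eq_big => z; first by rewrite inE.
by move=> /eqP ->; rewrite mul1n.
Qed.


Local Open Scope ring_scope.

Lemma pR_neq0 : (p%:R : rat) != 0.
Proof. by rewrite pnatr_eq0 -lt0n p_gt0. Qed.

Lemma inv_elem (z : 'I_n) :
  ((z.+1)%:R : rat)^-1 = ((pf z)%:R)^-1 * (p%:R)^+(lev z) / (p%:R)^+s.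
Proof.
have hp := pR_neq0.
have hpf : ((pf z)%:R : rat) != 0 by rewrite pnatr_eq0 -lt0n pf_gt0.
rewrite pf_eq natrM natrX.
rewrite -[in X in _ = _ / X](subnK (lev_le z)) exprD.
field; rewrite !expf_neq0 //=; exact: hpf.
Qed.

Lemma T_eq (S : {set 'I_n}) :
  \prod_(i in S) ((i.+1)%:R : rat)^-1 =
  (\prod_(i in S) ((pf i)%:R)^-1) * (p%:R)^+(W S) / (p%:R)^+(#|S| * s).
Proof.
rewrite (eq_bigr _ (fun z _ => inv_elem z)) !big_split /= prodrXr prodr_const.
by rewrite exprVn mulnC exprM.
Qed.

Lemma Pip_eq t : (t <= s)%N -> Pip p n s t = \prod_(z in Cs t) ((pf z)%:R : rat)^-1.
Proof.
move=> ts; rewrite /Pip big_add1 /= big_mkord.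
apply: eq_big => z.
  rewrite inE /lev; have := logn_z z; lia.
move=> _; congr (_^-1); rewrite /pf natr_div //.
  exact: pfactor_dvdnn.
by rewrite unitfE pnatr_eq0 -lt0n expn_gt0 p_gt0.
Qed.


Lemma partB t v : (t + v + 1 <= s)%N ->
  \sum_(S : {set 'I_n} | [&& #|S| == (#|Cs t|).+1, W S == (W (Cs t) + t.+1 + v)%N
                          & ~~ [forall z in S, (lev z <= t + v)%N]])
     \prod_(z in S) ((pf z)%:R : rat)^-1
  = Pip p n s t * \sum_(j <- calB p (take (t + v + 2) ds)) (j%:R)^-1.
Proof.
move=> hs.
set A := [set z : 'I_n | lev z == (t + v + 1)%N].
have notC : forall x, x \in A -> x \notin Cs t.
  by move=> x; rewrite !inE => /eqP ->; rewrite -ltnNge; lia.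
rewrite (eq_bigl (fun S => S \in [set x |: Cs t | x in A])); last first.
  move=> S; apply/idP/idP.
    case/and3P => /eqP hc /eqP hw /forall_inPn [z zS hz].
    have [h1 h2] := @S_split t S z zS hc.
    have hz' : lev z = (t + v + 1)%N by lia.
    apply/imsetP; exists z; first by rewrite inE hz'.
    by apply: h2; lia.
  case/imsetP => x xA ->.
  have xC := notC x xA; move: (xA); rewrite inE => /eqP hx.
  apply/and3P; split.
  - by rewrite cardsU1 xC.
  - by rewrite /W big_setU1 //= hx; apply/eqP; lia.
  apply/forall_inPn; exists x; first by rewrite setU11.
  by rewrite hx; lia.
rewrite big_imset /=; last first.
  move=> x y xA yA /setP h; have := h x; rewrite setU11 in_setU1 => /esym /orP [/eqP //|xC].
  by have := notC x xA; rewrite xC.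
rewrite (eq_bigr (fun x => ((pf x)%:R)^-1 * \prod_(z in Cs t) ((pf z)%:R : rat)^-1)); last first.
  by move=> x xA; rewrite big_setU1 //= notC.
rewrite -big_distrl /= mulrC Pip_eq; last lia.
congr (_ * _).
have e : (t + v + 2 = (t + v + 1).+1)%N by lia.
rewrite e -(@class_sum rat 0 +%R (t + v + 1) (fun j => (j%:R)^-1)) //.
by apply: eq_bigl => z; rewrite inE.
Qed.


Lemma ratord a b c d : (b <= s)%N -> (d <= s)%N ->
  ((a%:R / (p ^ b)%:R : rat) < c%:R / (p ^ d)%:R) = (a * p ^ (s - b) < c * p ^ (s - d))%N.
Proof.
move=> hb hd.
have hps : (0 : rat) < (p ^ s)%:R by rewrite ltr0n expn_gt0 p_gt0.
rewrite -(ltr_pM2r hps) -(ltr_nat rat).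
have e : forall x y, (y <= s)%N -> (x%:R / (p ^ y)%:R : rat) * (p ^ s)%:R = (x * p ^ (s - y))%:R.
  move=> x y hy; rewrite -{1}(subnK hy) expnD !natrM natrX.
  have hp := pR_neq0.
  field; by rewrite expf_neq0.
by rewrite !e.
Qed.

Lemma card_lt K (i : 'I_K) : #|[set j : 'I_K | (j < i)%N]| = i.
Proof.
rewrite -sum1_card (eq_bigl (fun j : 'I_K => (j < i)%N)); last by move=> j; rewrite inE.
rewrite (big_ord_narrow (ltnW (ltn_ord i))) sum1_card card_ord //.
Qed.

Definition smono K (g : 'I_K -> 'I_n) := forall i j : 'I_K, (i < j)%N -> (g i < g j)%N.

Lemma smono_inj K g : @smono K g -> injective g.
Proof.
move=> hg i j e; case: (ltngtP i j) => h.
- by have := hg _ _ h; rewrite e ltnn.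
- by have := hg _ _ h; rewrite e ltnn.
- exact: val_inj.
Qed.

Lemma smono_lt K g : @smono K g -> forall i j, (g i < g j)%N = (i < j)%N.
Proof.
move=> hg i j; case: (ltngtP i j) => h.
- by rewrite hg.
- by apply/negbTE; rewrite -leqNgt ltnW // hg.
- by rewrite (val_inj h) ltnn.
Qed.

Lemma rank K g : @smono K g -> forall i,
  #|[set z in [set g j | j : 'I_K] | (z < g i)%N]| = i.
Proof.
move=> hg i.
have -> : [set z in [set g j | j : 'I_K] | (z < g i)%N] = [set g j | j in [set j : 'I_K | (j < i)%N]].
  apply/setP => z; rewrite !inE; apply/andP/imsetP.
    case=> /imsetP [j _ ->] hj; exists j => //; rewrite inE -(@smono_lt K g hg) //.
  case=> j; rewrite inE => hj ->; split; first by apply/imsetP; exists j.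
  by rewrite (@smono_lt K g hg).
rewrite card_imset; first exact: card_lt.
exact: (@smono_inj K g).
Qed.

Lemma smono_eq K g1 g2 : @smono K g1 -> @smono K g2 ->
  [set g1 i | i : 'I_K] = [set g2 i | i : 'I_K] -> forall i, g1 i = g2 i.
Proof.
move=> h1 h2 e i.
have : g1 i \in [set g2 j | j : 'I_K] by rewrite -e; apply/imsetP; exists i.
case/imsetP => j _ hj.
have r1 := @rank K g1 h1 i; have r2 := @rank K g2 h2 j.
rewrite e hj r2 in r1.
by rewrite hj; congr (g2 _); apply: val_inj.
Qed.


Lemma Dw_lt w : (w <= s)%N -> (Dw w < p ^ w.+1)%N.
Proof.
move=> ws; have := @digval_lt p (take w.+1 ds).
rewrite size_takel ?hds //; apply; apply/allP => x /mem_take hx; exact: (allP hdig).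
Qed.

Lemma gval (i0 : 'I_n) w j : (w <= s)%N -> j \in calB p (take w.+1 ds) ->
  let z := insubd i0 (j * p ^ (s - w)).-1 : 'I_n in
  (z.+1 = j * p ^ (s - w))%N /\ lev z = w /\ pf z = j.
Proof.
move=> ws; rewrite calB_mem // => /and3P [j0 jD hj] /=.
have hm : (0 < j * p ^ (s - w))%N by rewrite muln_gt0 j0 expn_gt0 p_gt0.
have hmn : (j * p ^ (s - w) <= n)%N by rewrite -Dw_le.
have hv : ((insubd i0 (j * p ^ (s - w)).-1 : 'I_n) : nat) = (j * p ^ (s - w)).-1.
  by rewrite val_insubd; case: ifP => //; rewrite (_ : ((j * p ^ (s - w)).-1 < n)%N) //; lia.
have e : ((insubd i0 (j * p ^ (s - w)).-1 : 'I_n).+1 = j * p ^ (s - w))%N by rewrite hv; lia.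
split=> //; exact: (@lev_pf_uniq _ j w ws hj e).
Qed.


Lemma partA (es : seq nat) t v (i0 : 'I_n) :
  size es = t.+1 -> (t + v + 1 <= s)%N ->
  \sum_(S : {set 'I_n} | [&& #|S| == (digval p es).+1, W S == (Up p es + v)%N
                          & [forall z in S, (lev z <= t + v)%N]])
     \prod_(z in S) ((pf z)%:R : rat)^-1
  = Hprime p es (take (t + v + 1) ds).
Proof.
move=> hes hs.
set a := take (t + v + 1) ds.
have ha : size a = (t + v).+1 by rewrite size_takel ?hds; lia.
rewrite /Hprime /=.
have hv : ((size a).-1 - (size es).-1)%N = v by rewrite ha hes; lia.
rewrite hv pair_big_dep /=.
have hta : forall w, (w <= t + v + 1)%N -> take w a = take w ds.
  by move=> w hw; rewrite /a take_takel.
set K := (digval p es).+1.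
pose Tx := ({ffun 'I_K -> 'I_(size a)} * {ffun 'I_K -> 'I_(p ^ (size a).+1)})%type.
pose g := fun (x : Tx) (i : 'I_K) => (insubd i0 ((x.2 i : nat) * p ^ (s - x.1 i)).-1 : 'I_n).
pose f := fun x => [set g x i | i : 'I_K].
pose PA := [set x : Tx | [&& (\sum_(i < K) x.1 i)%N == (Up p es + v)%N,
   [forall i, (x.2 i : nat) \in calB p (take (x.1 i).+1 a)] &
   [forall i : 'I_K, forall j : 'I_K, (i < j)%N ==>
      (((x.2 i)%:R / (p ^ x.1 i)%:R : rat) < (x.2 j)%:R / (p ^ x.1 j)%:R)]]].
transitivity (\sum_(x in PA) \prod_(i < K) ((x.2 i : nat)%:R : rat)^-1); last first.
  by apply: eq_bigl => x; rewrite inE.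
have key : forall x, x \in PA ->
    (forall i, lev (g x i) = x.1 i /\ pf (g x i) = x.2 i) /\ @smono K (g x).
  move=> x; rewrite inE => /and3P [_ /forallP hB /forallP hO].
  have hi : forall i, (x.1 i <= s)%N /\ (x.2 i : nat) \in calB p (take (x.1 i).+1 ds).
    move=> i; have hlt : (x.1 i < (t + v).+1)%N by rewrite -ha; exact: ltn_ord.
    split; first by apply: leq_trans hs; rewrite addn1 ltnW.
    have e : take (x.1 i).+1 a = take (x.1 i).+1 ds.
      by rewrite hta // addn1.
    by rewrite -e.
  have hg : forall i, ((g x i).+1 = x.2 i * p ^ (s - x.1 i))%N /\ lev (g x i) = x.1 i /\ pf (g x i) = x.2 i.
    by move=> i; have [h1 h2] := hi i; exact: (@gval i0 _ _ h1 h2).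
  split; first by move=> i; have [_ [? ?]] := hg i.
  move=> i j hij; have := hO i => /forallP /(_ j); rewrite hij /=.
  have [hi1 _] := hi i; have [hj1 _] := hi j.
  rewrite ratord // -(proj1 (hg i)) -(proj1 (hg j)) ltnS //.
have hlev : forall w : 'I_(size a), (w <= t + v)%N.
  by move=> w; rewrite -ltnS -ha; exact: ltn_ord.
have finj : {in PA &, injective f}.
  move=> x y xP yP hxy.
  have [kx sx] := key x xP; have [ky sy] := key y yP.
  have e := @smono_eq K (g x) (g y) sx sy hxy.
  have h1 : x.1 = y.1.
    apply/ffunP => i; apply/val_inj; have [a1 _] := kx i; have [a2 _] := ky i.
    exact: (etrans (esym a1) (etrans (congr1 lev (e i)) a2)).
  have h2 : x.2 = y.2.
    apply/ffunP => i; apply/val_inj; have [_ a1] := kx i; have [_ a2] := ky i.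
    exact: (etrans (esym a1) (etrans (congr1 pf (e i)) a2)).
  by rewrite [x]surjective_pairing [y]surjective_pairing h1 h2.
have TSeq : forall S : {set 'I_n}, [&& #|S| == K, W S == (Up p es + v)%N
              & [forall z in S, (lev z <= t + v)%N]] = (S \in f @: PA).
  move=> S; apply/idP/idP; last first.
    case/imsetP => x xP ->; have [kx sx] := key x xP.
    have ginj := @smono_inj K (g x) sx.
    apply/and3P; split.
    - by rewrite card_imset // card_ord.
    - rewrite /W big_imset /=; last by move=> ? ? _ _; exact: ginj.
      move: xP; rewrite inE => /and3P [/eqP <- _ _].
      by apply/eqP; apply: eq_bigr => i _; rewrite (proj1 (kx i)).
    apply/forall_inP => z /imsetP [i _ ->]; rewrite (proj1 (kx i)); exact: hlev.
  case/and3P => /eqP hc /eqP hw /forall_inP hl.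
  have se : size (enum S) = K by rewrite -cardE hc.
  pose y := fun i : 'I_K => nth i0 (enum S) i.
  have hsort : sorted (fun a b : 'I_n => (a < b)%N) (enum S).
    rewrite /enum_mem -enumT; apply: sorted_filter.
      by move=> ? ? ?; exact: ltn_trans.
    by have := iota_ltn_sorted 0 n; rewrite -val_enum_ord sorted_map.
  have ys : @smono K y.
    move=> i j hij; apply: (sorted_ltn_nth _ i0 hsort) => //.
    - by move=> ? ? ?; exact: ltn_trans.
    - by rewrite inE se ltn_ord.
    - by rewrite inE se ltn_ord.
  have yS : [set y i | i : 'I_K] = S.
    apply/setP => z; apply/imsetP/idP.
      by case=> i _ ->; rewrite -mem_enum; apply: mem_nth; rewrite se.
    move=> zS; have zin : z \in enum S by rewrite mem_enum.
    have hidx : (index z (enum S) < K)%N by rewrite -se index_mem.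
    by exists (Ordinal hidx) => //; rewrite /y /= nth_index.
  have yinj := @smono_inj K y ys.
  have hl' : forall i, (lev (y i) < size a)%N.
    by move=> i; rewrite ha ltnS; apply: hl; rewrite -yS; apply/imsetP; exists i.
  have hpf : forall i, (pf (y i) < p ^ (size a).+1)%N.
    move=> i; apply: (leq_ltn_trans (pf_le (y i))); apply: (leq_trans (@Dw_lt _ (lev_le (y i)))).
    by rewrite leq_exp2l ?prime_gt1 // ltnS ltnW.
  pose x : Tx := ([ffun i => Ordinal (hl' i)], [ffun i => Ordinal (hpf i)]).
  have gx : forall i, g x i = y i.
    move=> i; apply: val_inj; rewrite /g /= !ffunE /= -pf_eq val_insubd /= ltn_ord //.
  apply/imsetP; exists x; last by rewrite /f (eq_imset _ gx) yS.
  rewrite inE; apply/and3P; split.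
  - rewrite -hw /W -yS big_imset /=; last by move=> ? ? _ _; exact: yinj.
    by apply/eqP; apply: eq_bigr => i _; rewrite ffunE.
  - apply/forallP => i; rewrite !ffunE /= hta; last by rewrite addn1 ltnS -ltnS -ha.
    by rewrite calB_mem ?lev_le // pf_gt0 pf_le pf_ndvd.
  apply/forallP => i; apply/forallP => j; apply/implyP => hij.
  by rewrite !ffunE /= ratord ?lev_le // -!pf_eq ltnS; exact: ys.
rewrite (eq_bigl _ _ TSeq) big_imset //.
apply: eq_bigr => x xP; have [kx sx] := key x xP.
rewrite /f big_imset /=; last by move=> ? ? _ _; exact: (@smono_inj K (g x) sx).
by apply: eq_bigr => i _; rewrite (proj2 (kx i)).
Qed.


Lemma main es t : size es = t.+1 -> (t.+1 <= s)%N -> take t.+1 ds = es -> (0 < n)%N ->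
  bigOp p ((s - t)%:Z - (((digval p es).+1) * s)%:Z + (Up p es)%:Z)
   (Hnk n (digval p es).+1
    - \sum_(v < s - t) Hp p es n s (take (t + v + 2) ds)
        * (p%:R : rat) ^ (v%:Z - (((digval p es).+1) * s)%:Z + (Up p es)%:Z)).
Proof.
move=> hes hts htake hn0.
have ts : (t <= s)%N by apply: ltnW.
have i0 : 'I_n := Ordinal hn0.
have hk : digval p es = #|Cs t| by rewrite card_Cs // -htake.
have hU : Up p es = (W (Cs t) + t.+1)%N.
  rewrite -htake /Up size_takel ?hds // W_Cs //.
  congr (_ + _)%N; apply: eq_bigr => w _; rewrite take_takel //.
set K := (digval p es).+1.
set U := Up p es.
pose Tq (S : {set 'I_n}) := \prod_(z in S) ((pf z)%:R : rat)^-1.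
pose F (S : {set 'I_n}) := \prod_(i in S) (((i : nat).+1)%:R : rat)^-1.
have lowW : forall S : {set 'I_n}, #|S| = K -> (U <= W S)%N.
  move=> S hc; have hc' : #|S| = (#|Cs t|).+1 by rewrite hc /K hk.
  have [x xS hx] := @exists_out t S hc'; have [h1 _] := @S_split t S x xS hc'.
  rewrite /U hU; lia.
have dec : Hnk n K = \sum_(v < s - t) \sum_(S : {set 'I_n} | (#|S| == K) && (W S == U + v)%N) F S
    + \sum_(S : {set 'I_n} | (#|S| == K) && ~~ (W S < U + (s - t))%N) F S.
  rewrite /Hnk (bigID (fun S : {set 'I_n} => (W S < U + (s - t))%N)) /=; congr (_ + _).
  rewrite (eq_bigr (fun S => \sum_(v < s - t | W S == (U + v)%N) F S)); last first.
    move=> S /andP [/eqP hc hlt]; have hl := lowW S hc.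
    have hv : (W S - U < s - t)%N by lia.
    rewrite (bigD1 (Ordinal hv)) /=; last by apply/eqP; lia.
    rewrite [X in _ = _ + X]big1 ?addr0 // => j /andP [/eqP hj hne]; exfalso; move: hne; apply/negP.
    rewrite negbK; apply/eqP/val_inj => /=; lia.
  rewrite (exchange_big_dep xpredT) //=; apply: eq_bigr => v _; apply: eq_bigl => S.
  case: (W S =P _) => h; rewrite ?andbF ?andbT //.
  by rewrite h ltn_add2l ltn_ord andbT.
have perv : forall v : 'I_(s - t),
    \sum_(S : {set 'I_n} | (#|S| == K) && (W S == U + v)%N) F S
    = Hp p es n s (take (t + v + 2) ds) * (p%:R : rat) ^ (v%:Z - (K * s)%:Z + U%:Z).
  move=> v; have hs : (t + v + 1 <= s)%N by have := ltn_ord v; lia.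
  rewrite (eq_bigr (fun S => Tq S * ((p%:R : rat)^+(U + v) / (p%:R)^+(K * s)))); last first.
    by move=> S /andP [/eqP hc /eqP hw]; rewrite /F T_eq hc hw mulrA.
  rewrite -big_distrl /= exprz_split ?pR_neq0 //.
  congr (_ * _).
  rewrite (bigID (fun S : {set 'I_n} => [forall z in S, (lev z <= t + v)%N])) /=.
  have ha : size (take (t + v + 2) ds) = (t + v + 2)%N by rewrite size_takel ?hds //; lia.
  rewrite /Hp ha hes /= take_takel; last lia.
  have -> : (t + v + 2).-1 = (t + v + 1)%N by lia.
  congr (_ + _).
    rewrite -(@partA es t v i0 hes hs); apply: eq_bigl => S; by rewrite andbA.
  rewrite -(@partB t v hs); apply: eq_bigl => S; by rewrite andbA /K hk /U hU.
have err : \sum_(S : {set 'I_n} | (#|S| == K) && ~~ (W S < U + (s - t))%N) F S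
    = (\sum_(S : {set 'I_n} | (#|S| == K) && ~~ (W S < U + (s - t))%N)
         Tq S * (p%:R : rat) ^+ (W S - (U + (s - t))))
      * (p%:R)^+(U + (s - t)) / (p%:R)^+(K * s).
  rewrite big_distrl big_distrl /=; apply: eq_bigr => S /andP[/eqP hc hnlt].
  rewrite /F T_eq hc -!mulrA; congr (_ * _); rewrite mulrA -exprD subnK //; lia.
rewrite dec (eq_bigr _ (fun v _ => perv v)).
set A := \sum_(i < s - t) _.
set E := \sum_(S | _) F S.
rewrite (_ : A + E - A = E); last by rewrite addrAC subrr add0r.
rewrite /E err.
apply: bigOp_of => //.
  apply: pint_sum => // S _; apply: pint_mul => //.
    by apply: pint_prod => // z _; apply: pint_inv; exact: pf_ndvd.
  exact: pint_natX.
rewrite PoszD; lia.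
Qed.

End Levels.

Local Open Scope ring_scope.

Theorem lemma3p2 (p : nat) (es ds : seq nat) (t s : nat) :
  prime p ->
  size es = t.+1 -> size ds = s.+1 ->
  all (fun x => x < p)%N es -> all (fun x => x < p)%N ds ->
  head 0%N es != 0%N -> head 0%N ds != 0%N ->
  (2 <= (digval p es).+1)%N ->
  (t.+1 <= s)%N ->
  take t.+1 ds = es ->
  let n := digval p ds in
  let k := (digval p es).+1 in
  bigOp p ((s - t)%:Z - (k * s)%:Z + (Up p es)%:Z)
    (Hnk n k
     - \sum_(v < s - t)
         Hp p es n s (take (t + v + 2) ds)
         * (p%:R : rat) ^ (v%:Z - (k * s)%:Z + (Up p es)%:Z)).
Proof.
move=> pp hes hds _ hdig _ hd0 _ hts htake n k.
apply: main => //.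
case: ds hds hdig hd0 {htake n k} => [//|d0 rest] /= [hr] _ hd0.
rewrite -cat1s digval_cat /digval /= -/(digval p rest) add0n.
have : (0 < p ^ size rest)%N by rewrite expn_gt0 prime_gt0.
move: hd0; rewrite -lt0n; nia.
Qed.
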